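(* Let $\mathbf{x}\in\mathbb{R}^{3n}$ be a pose whose points are not all collinear, and let $F:\mathbb{R}\times\mathbb{R}^{3n}\to\mathbb{R}^{3n}$ be any map with $F(0,\mathbf{x})=\mathbf{x}$ and $t\mapsto F(t,\mathbf{x})$ differentiable at $t=0$. Define $\mathbf{x}(t):=\mathrm{RMSDAlign}(\mathbf{x},F(t,\mathbf{x}))$ and assume $\mathbf{x}(0)=\mathbf{x}$ and that the aligning rotation and translation are differentiable at $t=0$. Then $\frac{d}{dt}\frac1n\sum_i\mathbf{x}_i(t)\big|_{t=0}=0$ and $\sum_i(\mathbf{x}_i-\bar{\mathbf{x}})\times\frac{d}{dt}\mathbf{x}_i(t)\big|_{t=0}=0$, where $\bar{\mathbf{x}}=\frac1n\sum_i\mathbf{x}_i$.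
   Context: $\mathrm{RMSD}(\mathbf{x},\mathbf{x}')=\big(\frac1n\sum_i\|\mathbf{x}_i-\mathbf{x}'_i\|^2\big)^{1/2}$ for $\mathbf{x},\mathbf{x}'\in\mathbb{R}^{3n}$ (viewed as $n$ points in $\mathbb{R}^3$). $\mathrm{RMSDAlign}(\mathbf{x},\mathbf{x}')=\operatorname{argmin}_{\mathbf{x}^\dagger\in\{g\mathbf{x}'\mid g\in SE(3)\}}\mathrm{RMSD}(\mathbf{x},\mathbf{x}^\dagger)$, where $SE(3)$ acts on each point. *)

(* Defs.v *)
(* R : realType, poses are n x 3 matrices (row i = point i). *)
From HB Require Import structures.
From mathcomp Require Import all_boot all_order all_algebra.
From mathcomp Require Import all_classical all_reals all_analysis.
Set Implicit Arguments. Unset Strict Implicit. Unset Printing Implicit Defensive.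
Import Order.TTheory GRing.Theory Num.Theory.
Import numFieldNormedType.Exports.
Local Open Scope ring_scope.

Section Defs.
Variable R : realType.

Definition pt (n : nat) (x : 'M[R]_(n,3)) (i : 'I_n) : 'rV[R]_3 := row i x.

Definition sqnorm (v : 'rV[R]_3) : R := \sum_(j < 3) v ord0 j ^+ 2.

Definition RMSD (n : nat) (x x' : 'M[R]_(n,3)) : R :=
  Num.sqrt (n%:R^-1 * \sum_(i < n) sqnorm (pt x i - pt x' i)).

Definition is_rotation (Q : 'M[R]_3) : Prop := Q^T *m Q = 1%:M /\ \det Q = 1.

(* action of the rigid motion (Q, T) in SE(3) on each point: x_i |-> x_i Q + T
   (row-vector convention) *)
Definition se3_act (n : nat) (Q : 'M[R]_3) (T : 'rV[R]_3) (x : 'M[R]_(n,3))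
  : 'M[R]_(n,3) := x *m Q + \matrix_(i < n, j < 3) T ord0 j.

(* y is an element of RMSDAlign(x, x'): a minimizer of RMSD(x, .) over the
   SE(3)-orbit of x' *)
Definition is_RMSDAlign (n : nat) (x x' y : 'M[R]_(n,3)) : Prop :=
  (exists Q T, is_rotation Q /\ y = se3_act Q T x') /\
  (forall Q T, is_rotation Q -> RMSD x y <= RMSD x (se3_act Q T x')).

Definition collinear (n : nat) (x : 'M[R]_(n,3)) : Prop :=
  exists (p d : 'rV[R]_3), forall i : 'I_n, exists s : R, pt x i = p + s *: d.

Definition centroid (n : nat) (x : 'M[R]_(n,3)) : 'rV[R]_3 :=
  n%:R^-1 *: \sum_(i < n) pt x i.

Definition cross (u v : 'rV[R]_3) : 'rV[R]_3 :=
  \row_(k < 3)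
    (if k == 0 :> nat then u ord0 (inord 1) * v ord0 (inord 2) - u ord0 (inord 2) * v ord0 (inord 1)
     else if k == 1 :> nat then u ord0 (inord 2) * v ord0 (inord 0) - u ord0 (inord 0) * v ord0 (inord 2)
     else u ord0 (inord 0) * v ord0 (inord 1) - u ord0 (inord 1) * v ord0 (inord 0)).

End Defs.

(* Main.v *)
Require Import Defs.
From HB Require Import structures.
From mathcomp Require Import all_boot all_order all_algebra.
From mathcomp Require Import all_classical all_reals all_analysis.
From mathcomp Require Import ring lra.
Import Order.TTheory GRing.Theory Num.Theory.
Import numFieldNormedType.Exports.
Local Open Scope ring_scope.

Lemma big3 {R : realType} (F : 'I_3 -> R) :
  \sum_(j < 3) F j = F (inord 0) + F (inord 1) + F (inord 2).
Proof.
rewrite !big_ord_recr big_ord0 /= add0r.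
congr (_ + _ + _); congr F; apply: val_inj; rewrite /= inordK //.
Qed.
Lemma plane {R : realType} (al be : R) :
  (forall c s : R, c ^+ 2 + s ^+ 2 = 1 -> (c - 1) * al + s * be <= 0) -> be = 0.
Proof.
move=> H.
set u := be / (`|al| + 1).
have hp : 0 < 1 + u ^+ 2 by rewrite ltr_pwDl // sqr_ge0.
have hn : 1 + u ^+ 2 != 0 by rewrite gt_eqF.
have := H ((1 - u^+2) / (1 + u^+2)) (2 * u / (1 + u^+2)).
have -> : ((1 - u ^+ 2) / (1 + u ^+ 2)) ^+ 2 + (2 * u / (1 + u ^+ 2)) ^+ 2 = 1.
  by field.
move=> /(_ erefl).
have -> : ((1 - u ^+ 2) / (1 + u ^+ 2) - 1) * al + 2 * u / (1 + u ^+ 2) * be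
   = (2 / (1 + u^+2)) * (u * be - u^+2 * al) by field.
rewrite pmulr_rle0 ?divr_gt0 // subr_le0 => h.
have ha : 0 < `|al| + 1 by rewrite ltr_pwDr // normr_ge0.
have ha0 : `|al| + 1 != 0 by rewrite gt_eqF.
have h2 : u ^+ 2 * al <= u ^+ 2 * `|al|.
  by rewrite ler_wpM2l ?sqr_ge0 // real_ler_norm // num_real.
have h3 : u * be = (`|al| + 1) * u ^+ 2 by rewrite /u; field.
have : (`|al| + 1) * u ^+ 2 <= u ^+ 2 * `|al| by rewrite -h3 (le_trans h).
have : u ^+ 2 <= 0 by nra.
move=> hu _; apply/eqP.
have : u = 0 by apply/eqP; rewrite -sqrf_eq0 eq_le hu sqr_ge0.
rewrite /u => /eqP; rewrite mulf_eq0 invr_eq0 (negPf ha0) orbF //.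
Qed.

Definition mk3 {R : realType} (a b c d e f g h k : R) : 'M[R]_3 :=
  \matrix_(i < 3, j < 3) nth 0 (nth [::] [:: [:: a;b;c]; [::d;e;f]; [::g;h;k]] i) j.

Lemma det_mk3 (R : realType) (a b c d e f g h k : R) :
  \det (mk3 a b c d e f g h k) = a*(e*k - f*h) - b*(d*k - f*g) + c*(d*h - e*g).
Proof.
rewrite (expand_det_row _ ord0) !big_ord_recr big_ord0 /= /cofactor.
rewrite !(expand_det_row _ ord0) !big_ord_recr big_ord0 /= /cofactor.
rewrite !big_ord0 !det_mx11 !mxE /=. ring.
Qed.

Ltac mxcase := let a := fresh "a" in let b := fresh "b" in let Ha := fresh "Ha" in let Hb := fresh "Hb" in
  apply/matrixP => a b; rewrite !mxE ?big3 !mxE !inordK //;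
  case: a => [[|[|[|a]]] Ha] //; case: b => [[|[|[|b]]] Hb] //=.

Definition rotP {R : realType} (P : 'M[R]_3) := is_rotation P /\ P *m P^T = 1%:M.

Lemma rot01 {R : realType} (c s : R) : c ^+ 2 + s ^+ 2 = 1 -> rotP (mk3 c s 0 (-s) c 0 0 0 1).
Proof. move=> h; split; [split|]; [mxcase; nra | rewrite det_mk3; nra | mxcase; nra]. Qed.
Lemma rot12 {R : realType} (c s : R) : c ^+ 2 + s ^+ 2 = 1 -> rotP (mk3 1 0 0 0 c s 0 (-s) c).
Proof. move=> h; split; [split|]; [mxcase; nra | rewrite det_mk3; nra | mxcase; nra]. Qed.
Lemma rot02 {R : realType} (c s : R) : c ^+ 2 + s ^+ 2 = 1 -> rotP (mk3 c 0 s 0 1 0 (-s) 0 c).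
Proof. move=> h; split; [split|]; [mxcase; nra | rewrite det_mk3; nra | mxcase; nra]. Qed.

Lemma se3_comp {R : realType} n (P Q : 'M[R]_3) (U T : 'rV[R]_3) (z : 'M[R]_(n,3)) :
  se3_act P U (se3_act Q T z) = se3_act (Q *m P) (T *m P + U) z.
Proof.
rewrite /se3_act mulmxDl mulmxA -addrA; congr (_ + _).
apply/matrixP => i j; rewrite !mxE; congr (_ + _).
by apply: eq_bigr => k _; rewrite !mxE.
Qed.

Lemma rot_comp {R : realType} (Q P : 'M[R]_3) :
  is_rotation Q -> is_rotation P -> is_rotation (Q *m P).
Proof.
move=> [hQ dQ] [hP dP]; split; last by rewrite det_mulmx dQ dP mulr1.
by rewrite trmx_mul mulmxA -(mulmxA P^T) hQ mulmx1 hP.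
Qed.

Lemma sqnorm_ge0 {R : realType} (v : 'rV[R]_3) : 0 <= sqnorm v.
Proof. by apply: sumr_ge0 => j _; rewrite sqr_ge0. Qed.

Lemma min_ineq {R : realType} n (x y z : 'M[R]_(n,3)) : (0 < n)%N ->
  RMSD x y <= RMSD x z ->
  \sum_(i < n) sqnorm (pt x i - pt y i) <= \sum_(i < n) sqnorm (pt x i - pt z i).
Proof.
move=> n0; rewrite /RMSD ler_sqrt; last first.
  by rewrite mulr_ge0 ?invr_ge0 ?ler0n // sumr_ge0 // => i _; rewrite sqnorm_ge0.
by rewrite ler_pM2l // invr_gt0 ltr0n.
Qed.

Lemma orbit_min {R : realType} n (x z y : 'M[R]_(n,3)) Q T :
  is_rotation Q -> y = se3_act Q T z ->
  (forall Q T, is_rotation Q -> RMSD x y <= RMSD x (se3_act Q T z)) ->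
  forall P U, is_rotation P -> RMSD x y <= RMSD x (se3_act P U y).
Proof.
move=> hQ -> H P U hP; rewrite se3_comp; apply: H; exact: rot_comp.
Qed.

Definition dot {R : realType} (v w : 'rV[R]_3) : R := \sum_(j < 3) v ord0 j * w ord0 j.

Lemma sqnormB {R : realType} (v w : 'rV[R]_3) :
  sqnorm (v - w) = sqnorm v - 2 * dot v w + sqnorm w.
Proof.
rewrite /sqnorm /dot mulr_sumr -sumrN -!big_split /=.
by apply: eq_bigr => j _; rewrite !mxE; ring.
Qed.

Lemma sqnormM {R : realType} (v : 'rV[R]_3) P : P *m P^T = 1%:M ->
  sqnorm (v *m P) = sqnorm v.
Proof.
move=> h.
have E : forall w : 'rV[R]_3, sqnorm w = (w *m w^T) ord0 ord0.
  by move=> w; rewrite /sqnorm !mxE; apply: eq_bigr => j _; rewrite !mxE expr2.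
by rewrite !E trmx_mul !mulmxA -(mulmxA v) h mulmx1.
Qed.

Lemma dot_suml {R : realType} n (d : 'I_n -> 'rV[R]_3) U :
  dot (\sum_i d i) U = \sum_i dot (d i) U.
Proof.
rewrite /dot; under eq_bigr do rewrite summxE mulr_suml.
by rewrite exchange_big.
Qed.

Lemma trans_lemma {R : realType} n (x y : 'M[R]_(n,3)) :
  (forall P U, is_rotation P -> RMSD x y <= RMSD x (se3_act P U y)) ->
  forall j, \sum_(i < n) y i j = \sum_(i < n) x i j.
Proof.
case: n x y => [|n] x y H j; first by rewrite !big_ord0.
have rot1 : is_rotation (1%:M : 'M[R]_3) by split; rewrite ?trmx1 ?mulmx1 ?det1.
set d := fun i => pt x i - pt y i.
set a := \sum_i d i.
set k := (n.+1%:R : R)^-1.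
have kp : 0 < k by rewrite invr_gt0 ltr0n.
have := @min_ineq R n.+1 x y _ (ltn0Sn n) (H _ (k *: a) rot1).
have E : forall i, pt x i - pt (se3_act 1%:M (k *: a) y) i = d i - k *: a.
  move=> i; rewrite /d; apply/rowP => l; rewrite /se3_act mulmx1 !mxE.
  ring.
under [X in _ <= X]eq_bigr do rewrite E sqnormB.
rewrite big_split sumrB /= sumr_const card_ord -mulr_sumr -dot_suml -/a.
have -> : dot a (k *: a) = k * sqnorm a.
  by rewrite /dot /sqnorm mulr_sumr; apply: eq_bigr => l _; rewrite !mxE; ring.
have -> : sqnorm (k *: a) = k ^+ 2 * sqnorm a.
  by rewrite /sqnorm mulr_sumr; apply: eq_bigr => l _; rewrite !mxE; ring.
set S := \sum_(i < n.+1) sqnorm (pt x i - pt y i).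
have nk : k * n.+1%:R = 1 by rewrite mulVf // pnatr_eq0.
move=> h.
have qz : sqnorm a <= 0.
  have h2 : 0 <= k * (- sqnorm a).
    have -> : k * - sqnorm a = - (2 * (k * sqnorm a)) + (k ^+ 2 * sqnorm a) *+ n.+1.
      rewrite -mulr_natr /k; field.
      by rewrite addrC natr1 pnatr_eq0.
    by rewrite -(lerD2l S) addr0 addrA.
  by move: h2; rewrite pmulr_rge0 // oppr_ge0.
have q0 : sqnorm a = 0 by apply/eqP; rewrite eq_le qz sqnorm_ge0.
have := @psumr_eq0P _ _ xpredT (fun l => a ord0 l ^+ 2) (fun l _ => sqr_ge0 _) q0 j isT.
move/eqP; rewrite sqrf_eq0 /a summxE => /eqP.
rewrite /d /=; under eq_bigr do rewrite !mxE.
by rewrite sumrB => /eqP; rewrite subr_eq0 => /eqP ->.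
Qed.

Definition Mxy {R : realType} {n} (x y : 'M[R]_(n,3)) (a b : 'I_3) : R :=
  \sum_(i < n) x i a * y i b.

Lemma Gexpr {R : realType} n (x y : 'M[R]_(n,3)) P :
  \sum_(i < n) dot (pt x i) (pt y i *m P) = \sum_(a < 3) \sum_(b < 3) P b a * Mxy x y a b.
Proof.
rewrite /dot exchange_big; apply: eq_bigr => a _.
rewrite /pt; under eq_bigr => i _ do rewrite -row_mul. under eq_bigr => i _ do rewrite mxE. under eq_bigr => i _ do rewrite mxE. under eq_bigr => i _ do rewrite mxE. under eq_bigr => i _ do rewrite mulr_sumr.
rewrite exchange_big; apply: eq_bigr => b _.
rewrite /Mxy mulr_sumr; apply: eq_bigr => i _; ring.
Qed.

Lemma Gbase {R : realType} n (x y : 'M[R]_(n,3)) :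
  \sum_(i < n) dot (pt x i) (pt y i) = \sum_(a < 3) Mxy x y a a.
Proof.
rewrite /dot exchange_big; apply: eq_bigr => a _.
by rewrite /Mxy; apply: eq_bigr => i _; rewrite !mxE.
Qed.

Lemma rot_ineq {R : realType} n (x y : 'M[R]_(n.+1,3)) :
  (forall P U, is_rotation P -> RMSD x y <= RMSD x (se3_act P U y)) ->
  forall P, rotP P ->
  \sum_(i < n.+1) dot (pt x i) (pt y i *m P) <= \sum_(i < n.+1) dot (pt x i) (pt y i).
Proof.
move=> H P [hP hPt].
have := @min_ineq R n.+1 x y _ (ltn0Sn n) (H _ 0 hP).
have E : forall i, pt (se3_act P 0 y) i = pt y i *m P.
  move=> i; rewrite /se3_act /pt.
  have -> : \matrix_(i0 < n.+1, j < 3) (0 : 'rV[R]_3) ord0 j = 0.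
    by apply/matrixP => ? ?; rewrite !mxE.
  by rewrite addr0 row_mul.
under [X in _ <= X]eq_bigr do rewrite E sqnormB sqnormM //.
rewrite (eq_bigr (fun i => sqnorm (pt x i) - 2 * dot (pt x i) (pt y i) + sqnorm (pt y i))); last first.
  by move=> i _; rewrite sqnormB.
rewrite !big_split /= !sumrN -!mulr_sumr.
lra.
Qed.

Lemma rot_lemma {R : realType} n (x y : 'M[R]_(n,3)) :
  (forall P U, is_rotation P -> RMSD x y <= RMSD x (se3_act P U y)) ->
  [/\ Mxy x y (inord 0) (inord 1) = Mxy x y (inord 1) (inord 0),
      Mxy x y (inord 1) (inord 2) = Mxy x y (inord 2) (inord 1) &
      Mxy x y (inord 0) (inord 2) = Mxy x y (inord 2) (inord 0)].
Proof.
case: n x y => [|n] x y H; first by rewrite /Mxy !big_ord0.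
have HR := @rot_ineq R n x y H.
split.
- have := @plane R (Mxy x y (inord 0) (inord 0) + Mxy x y (inord 1) (inord 1))
    (Mxy x y (inord 1) (inord 0) - Mxy x y (inord 0) (inord 1)).
  move=> h; apply/eqP; rewrite eq_sym -subr_eq0; apply/eqP; apply: h => c s hcs.
  have := HR _ (rot01 _ _ hcs); rewrite Gexpr Gbase !big3 !mxE !inordK //=; lra.
- have := @plane R (Mxy x y (inord 1) (inord 1) + Mxy x y (inord 2) (inord 2))
    (Mxy x y (inord 2) (inord 1) - Mxy x y (inord 1) (inord 2)).
  move=> h; apply/eqP; rewrite eq_sym -subr_eq0; apply/eqP; apply: h => c s hcs.
  have := HR _ (rot12 _ _ hcs); rewrite Gexpr Gbase !big3 !mxE !inordK //=; lra.
- have := @plane R (Mxy x y (inord 0) (inord 0) + Mxy x y (inord 2) (inord 2))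
    (Mxy x y (inord 2) (inord 0) - Mxy x y (inord 0) (inord 2)).
  move=> h; apply/eqP; rewrite eq_sym -subr_eq0; apply/eqP; apply: h => c s hcs.
  have := HR _ (rot02 _ _ hcs); rewrite Gexpr Gbase !big3 !mxE !inordK //=; lra.
Qed.

Lemma lincomb {R : realType} n (c : 'I_n -> R) (g : 'I_n -> R -> R) :
  (forall i, derivable (g i) 0 1) ->
  'D_1 (fun t => \sum_i c i * g i t) 0 = \sum_i c i * 'D_1 (g i) 0.
Proof.
move=> dg.
have -> : (fun t => \sum_i c i * g i t) = \sum_i (fun t => c i * g i t).
  by rewrite fct_sumE.
rewrite derive_sum.
  by apply: eq_bigr => i _; rewrite -deriveMl.
move=> i; have -> : (fun t => c i * g i t) = (fun t => c i) * g i by [].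
by apply: derivableM => //; exact: derivable_cst.
Qed.

Lemma lin_cst {R : realType} n (c : 'I_n -> R) (g : 'I_n -> R -> R) K :
  (forall i, derivable (g i) 0 1) ->
  (forall t, \sum_i c i * g i t = K) -> \sum_i c i * 'D_1 (g i) 0 = 0.
Proof.
move=> dg h; rewrite -lincomb //.
have -> : (fun t => \sum_i c i * g i t) = cst K by apply: funext => t; rewrite h.
exact: derive_cst.
Qed.

Lemma lin_eq {R : realType} n (c c' : 'I_n -> R) (g g' : 'I_n -> R -> R) :
  (forall i, derivable (g i) 0 1) -> (forall i, derivable (g' i) 0 1) ->
  (forall t, \sum_i c i * g i t = \sum_i c' i * g' i t) ->
  \sum_i c i * 'D_1 (g i) 0 = \sum_i c' i * 'D_1 (g' i) 0.
Proof.
move=> dg dg' h; rewrite -!lincomb //.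
by rewrite (_ : (fun t => _) = (fun t => \sum_i c' i * g' i t)) //; apply: funext => t; rewrite h.
Qed.

Lemma cross_sum {R : realType} n (x d : 'I_n -> 'I_3 -> R) (ca cb : R) (a b : 'I_3) :
  \sum_i x i b * d i a = \sum_i x i a * d i b ->
  \sum_i d i a = 0 -> \sum_i d i b = 0 ->
  \sum_i ((x i a - ca) * d i b - (x i b - cb) * d i a) = 0.
Proof.
move=> hx ha hb.
rewrite (eq_bigr (fun i => (x i a * d i b - x i b * d i a) + (cb * d i a - ca * d i b))); last first.
  by move=> i _; ring.
by rewrite big_split /= !sumrB -!mulr_sumr hx ha hb subrr !mulr0 subrr addr0.
Qed.

Theorem mainTheorem2 (R : realType) (n : nat) (x : 'M[R]_(n,3))
  (F : R -> 'M[R]_(n,3) -> 'M[R]_(n,3))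
  (Q : R -> 'M[R]_3) (T : R -> 'rV[R]_3) :
  ~ collinear x ->
  F 0 x = x ->
  derivable (fun t => F t x) 0 1 ->
  (forall t, is_rotation (Q t)) ->
  (forall t, is_RMSDAlign x (F t x) (se3_act (Q t) (T t) (F t x))) ->
  se3_act (Q 0) (T 0) (F 0 x) = x ->
  derivable Q 0 1 ->
  derivable T 0 1 ->
  let xt := fun t => se3_act (Q t) (T t) (F t x) in
  'D_1 (fun t => centroid (xt t)) 0 = 0 /\
  \sum_(i < n) cross (pt x i - centroid x) ('D_1 (fun t => pt (xt t) i) 0) = 0.
Proof.
move=> _ _ dF hQ Hal _ dQ dT xt.
have Hmin : forall t P U, is_rotation P -> RMSD x (xt t) <= RMSD x (se3_act P U (xt t)).
  by move=> t; apply: (@orbit_min R n x (F t x) (xt t) (Q t) (T t) (hQ t) erefl (Hal t).2).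
have HA : forall t j, \sum_(i < n) xt t i j = \sum_(i < n) x i j.
  by move=> t; exact: (@trans_lemma R n x (xt t) (Hmin t)).
have dF' := (derivable_mxP _ _ _).1 dF.
have dQ' := (derivable_mxP _ _ _).1 dQ.
have dT' := (derivable_mxP _ _ _).1 dT.
have dY : forall i j, derivable (fun t => xt t i j) 0 1.
  move=> i j.
  have -> : (fun t => xt t i j) =
     (\sum_k ((fun t => F t x i k) * (fun t => Q t k j))) + (fun t => T t ord0 j).
    apply: funext => t; rewrite /xt /se3_act !mxE fct_sumE /=.
    by congr (_ + _); apply: eq_bigr.
  apply: derivableD => //; apply: derivable_sum => k.
  exact: derivableM.
set d := fun i j => 'D_1 (fun t => xt t i j) 0.
have Drow : forall i, 'D_1 (fun t => pt (xt t) i) 0 = \row_j d i j.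
  move=> i.
  have E : forall a j, (fun t => pt (xt t) i a j) = (fun t => xt t i j).
    by move=> a j; apply: funext => t; rewrite mxE.
  rewrite derive_mx; last by apply/derivable_mxP => a j; rewrite E.
  by apply/rowP => j; rewrite !mxE E.
have D0 : forall j, \sum_(i < n) d i j = 0.
  move=> j.
  have ht : forall t, \sum_i (fun _ => 1) i * (fun i t => xt t i j) i t = \sum_(i < n) x i j.
    by move=> t; rewrite -(HA t j); apply: eq_bigr => i _; rewrite mul1r.
  have h := @lin_cst R n (fun _ => 1) (fun i t => xt t i j) (\sum_(i < n) x i j) (fun i => dY i j) ht.
  by rewrite -[RHS]h; apply: eq_bigr => i _; rewrite mul1r.
have DS : forall a b, (forall t, Mxy x (xt t) a b = Mxy x (xt t) b a) ->
    \sum_(i < n) x i a * d i b = \sum_(i < n) x i b * d i a.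
  move=> a b h.
  apply: (@lin_eq R n (fun i => x i a) (fun i => x i b) (fun i t => xt t i b) (fun i t => xt t i a)).
  - by move=> i; apply: dY.
  - by move=> i; apply: dY.
  - exact: h.
have S01 := DS (inord 0) (inord 1) (fun t => let: And3 h _ _ := @rot_lemma R n x (xt t) (Hmin t) in h).
have S12 := DS (inord 1) (inord 2) (fun t => let: And3 _ h _ := @rot_lemma R n x (xt t) (Hmin t) in h).
have S02 := DS (inord 0) (inord 2) (fun t => let: And3 _ _ h := @rot_lemma R n x (xt t) (Hmin t) in h).
split.
  rewrite (_ : (fun t => centroid (xt t)) = cst (centroid x)); first exact: derive_cst.
  apply: funext => t; apply/rowP => j; rewrite /centroid !mxE !summxE; congr (_ * _).
  under eq_bigr do rewrite mxE.
  under [RHS]eq_bigr do rewrite mxE.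
  exact: HA.
under eq_bigr do rewrite Drow.
set cen := centroid x.
apply/rowP => k; rewrite summxE [RHS]mxE.
case: k => [[|[|[|k]]] Hk] //.
- rewrite (eq_bigr (fun i => (x i (inord 1) - cen ord0 (inord 1)) * d i (inord 2)
                   - (x i (inord 2) - cen ord0 (inord 2)) * d i (inord 1))); last first.
    by move=> i _; rewrite /cross !mxE /=.
  by apply: cross_sum; rewrite ?D0 ?S12.
- rewrite (eq_bigr (fun i => (x i (inord 2) - cen ord0 (inord 2)) * d i (inord 0)
                   - (x i (inord 0) - cen ord0 (inord 0)) * d i (inord 2))); last first.
    by move=> i _; rewrite /cross !mxE /=.
  by apply: cross_sum; rewrite ?D0 ?S02.
- rewrite (eq_bigr (fun i => (x i (inord 0) - cen ord0 (inord 0)) * d i (inord 1)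
                   - (x i (inord 1) - cen ord0 (inord 1)) * d i (inord 0))); last first.
    by move=> i _; rewrite /cross !mxE /=.
  by apply: cross_sum; rewrite ?D0 ?S01.
Qed.
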